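(* Consider the bandit setting of the Dd-MDP problem with a finite policy collection $\Gamma$, and suppose the instance satisfies the stateless chasability condition with parameter $\sigma>0$ via a chasing oracle applicable to the bandit setting. Then for every period length $\tau>\sigma$, the regret of algorithm C\&S-FLP on a $T$-round instance is $O\!\left(\frac{\sigma T}{\tau}+\sqrt{|\Gamma|\,T\tau}\right)$.
   Context: Dd-MDP: finite state set $\mathcal S$, finite action set $\mathcal X$, feasible sets $X_s\subseteq\mathcal X$; $T$ rounds from initial state $s_1$. In round $t$ the decision maker plays a (possibly randomized) $x_t\in X_{s_t}$, the adversary simultaneously chooses a transition function $g_t$ and a reward function $f_t$ (values in $[0,1]$), $s_{t+1}=g_t(s_t,x_t)$ and the reward is $f_t(s_t,x_t)$. In the bandit setting, after round $t$ the decision maker observes only $f_t(s_t,x_t)$ and the function $g_t$. A policy is $\gamma:\mathcal S\to\mathcal X$ with $\gamma(s)\in X_s$, simulated by $s^\gamma_1=s_1$, $x^\gamma_t=\gamma(s^\gamma_t)$, $s^\gamma_{t+1}=g_t(s^\gamma_t,x^\gamma_t)$. Regret: $\max_{\gamma\in\Gamma}\sum_tf_t(s^\gamma_t,x^\gamma_t)-\sum_t\mathbb{E}[f_t(s_t,x_t)]$. Chasing oracle: for any target $\gamma\in\Gamma$, started at round $t_{\mathrm{init}}$ from any state $s_{\mathrm{init}}$, it outputs actions $\hat x(t)$ feasible for $\hat s(t)$ ($\hat s(t_{\mathrm{init}})=s_{\mathrm{init}}$, $\hat s(t)=g_{t-1}(\hat s(t-1),\hat x(t-1))$) with chasing regret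 $\sum_{t=t_{\mathrm{init}}}^{t_{\mathrm{final}}}f_t(s^\gamma_t,x^\gamma_t)-\sum_{t=t_{\mathrm{init}}}^{t_{\mathrm{final}}}\mathbb{E}[f_t(\hat s(t),\hat x(t))]\le\sigma$ for every $t_{\mathrm{final}}\ge t_{\mathrm{init}}$. It is applicable to the bandit setting if each $\hat x(t)$ depends only on $s_{\mathrm{init}}$, the realized rewards $f_{t'}(\hat s(t'),\hat x(t'))$ and the functions $g_{t'}$ for $t'\in[t_{\mathrm{init}},t-1]$. Stateless chasability with parameter $\sigma$: such an oracle exists and additionally, for every target $\gamma$, every $t_{\mathrm{init}}$, every $t_{\mathrm{final}}\ge t_{\mathrm{init}}$ and any two initial states $s_{\mathrm{init}},s'_{\mathrm{init}}$, the expected cumulative rewards $\sum_{t=t_{\mathrm{init}}}^{t_{\mathrm{final}}}\mathbb{E}[f_t(\hat s(t),\hat x(t))]$ of the two runs coincide. Multiarmed bandit (MBP): arms $\Gamma$, $\Psi$ rounds; in round $\psi$ the adversary fixes $F_\psi:\Gamma\to[0,1]$, the algorithm picks $\gamma_\psi$ and observes only $F_\psi(\gamma_\psi)$; regret $\max_\gamma\sum_\psi F_\psi(\gamma)-\sum_\psi\mathbb{E}[F_\psi(\gamma_\psi)]$. INF denotes an MBP algorithm with regret $O(\sqrt{|\Gamma|\Psi})$. Algorithm C\&S-FLP: split the rounds into consecutive periods of $\tau$ rounds (the last may be shorter). At the start of period $\psi$, INF picks $\gamma_\psi\in\Gamma$; a fresh run of the chasing oracle is started with target $\gamma_\psi$,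 initial round $(\psi-1)\tau+1$ and initial state $s_{(\psi-1)\tau+1}$; throughout the period the algorithm plays the oracle's actions, feeding it the realized rewards and $g_t$. At the period's end (round $t=\min\{T,\psi\tau\}$), INF is fed the reward $F_\psi(\gamma_\psi)=\frac1\tau\sum_{t'=(\psi-1)\tau+1}^{t}f_{t'}(s_{t'},x_{t'})$. *)

(* Defs.v *)
From mathcomp Require Import all_boot all_order all_algebra.
From mathcomp Require Import Rstruct.
From Stdlib Require Import Rdefinitions.
Set Implicit Arguments. Unset Strict Implicit. Unset Printing Implicit Defensive.
Import Order.TTheory GRing.Theory Num.Theory.
Local Open Scope ring_scope.

(* A (finitely supported) probability distribution on T, as a list of
   (weight, outcome) pairs; dvalid: weights nonnegative and summing to 1. *)
Definition dist (T : Type) := seq (R * T).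
Definition dvalid (T : Type) (d : dist T) : bool :=
  all (fun e => 0 <= e.1) d && (\sum_(e <- d) e.1 == 1).
Definition dE (T : Type) (d : dist T) (h : T -> R) : R :=
  \sum_(e <- d) e.1 * h e.2.

Section DdMDP.
Variables (S X : finType).
Variable (f : nat -> S -> X -> R).  (* reward functions f_t, rounds t = 1,2,... *)
Variable (g : nat -> S -> X -> S).

(* State of the simulated policy gam at round t.+1 (so round 1 is pstate 0). *)
Fixpoint pstate (s1 : S) (gam : S -> X) (t : nat) : S :=
  match t with
  | 0 => s1
  | t'.+1 => let s := pstate s1 gam t' in g t (s) (gam s)
  end.

Definition polsum (s1 : S) (gam : S -> X) (t0 tf : nat) : R :=
  \sum_(t0 <= t < tf.+1) f t (pstate s1 gam t.-1) (gam (pstate s1 gam t.-1)).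

(* Bandit-setting information of a chasing-oracle run: for each past round
   of the run, the oracle's own action, the realized reward f_t'(s,x) and the
   transition function g_t'. *)
Definition hist := seq (X * R * (S -> X -> S)).

(* Chasing oracle applicable to the bandit setting: given the target policy,
   the initial round t_init, the initial state s_init and the bandit history
   of the run so far, a (randomized) choice of the next action. *)
Definition oracle := (S -> X) -> nat -> S -> hist -> dist X.

Definition histState (s0 : S) (h : hist) : S :=
  foldl (fun s e => e.2 s e.1.1) s0 h.

Fixpoint histFeas (feas : S -> X -> bool) (s0 : S) (h : hist) : bool :=
  match h with
  | [::] => true
  | e :: h' => feas s0 e.1.1 && histFeas feas (e.2 s0 e.1.1) h'
  end.

(* Running the randomized oracle strategy d for n rounds starting at round t
   in state s with history h and accumulated reward acc; the result is the
   expectation of k (final state) (total accumulated reward). *)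
Fixpoint orun (d : hist -> dist X) (n t : nat) (s : S) (h : hist) (acc : R)
    (k : S -> R -> R) : R :=
  match n with
  | 0 => k s acc
  | n'.+1 =>
      dE (d h) (fun x =>
        orun d n' t.+1 (g t s x) (rcons h (x, f t s x, g t)) (acc + f t s x) k)
  end.

Definition oexp (O : oracle) (gam : S -> X) (t0 : nat) (s0 : S) (n : nat) : R :=
  orun (O gam t0 s0) n t0 s0 [::] 0 (fun _ r => r).

Definition oracle_valid (feas : S -> X -> bool) (O : oracle) : Prop :=
  forall gam t0 s0 (h : hist),
    dvalid (O gam t0 s0 h) /\
    (histFeas feas s0 h ->
       all (fun e => (0 < e.1) ==> feas (histState s0 h) e.2) (O gam t0 s0 h)).

(* Chasing regret at most sigma, for every target in Gamma = range pol,
   every 1 <= t_init <= t_final <= T and every initial state. *)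
Definition chasing (A : finType) (pol : A -> S -> X) (O : oracle)
    (s1 : S) (T : nat) (sigma : R) : Prop :=
  forall (a : A) (t0 tf : nat) (s0 : S), (1 <= t0)%nat -> (t0 <= tf)%nat -> (tf <= T)%nat ->
    polsum s1 (pol a) t0 tf - oexp O (pol a) t0 s0 (tf - t0).+1 <= sigma.

Definition stateless (A : finType) (pol : A -> S -> X) (O : oracle) (T : nat) : Prop :=
  forall (a : A) (t0 tf : nat) (s0 s0' : S), (1 <= t0)%nat -> (t0 <= tf)%nat -> (tf <= T)%nat ->
    oexp O (pol a) t0 s0 (tf - t0).+1 = oexp O (pol a) t0 s0' (tf - t0).+1.
End DdMDP.

(* An MBP algorithm: for every finite arm set A and horizon Psi, a randomized
   choice of the next arm given the bandit history (chosen arm, observed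
   reward) of the previous rounds. *)
Definition mbp_alg := forall (A : finType), nat -> seq (A * R) -> dist A.

(* Bandit game against an adaptive randomized adversary: in each round the
   adversary draws an outcome w (of an arbitrary type Om) from env h, where h
   is the full past of the game, which fixes the reward function F w : A -> R;
   simultaneously the algorithm draws an arm a from its strategy applied to
   its bandit observations, and observes F w a.  mbp_val returns the expected
   sum over the n remaining rounds of pay w a. *)
Fixpoint mbp_val (A : finType) (Om : Type) (alg : seq (A * R) -> dist A)
    (env : seq (Om * A) -> dist Om) (F : Om -> A -> R) (pay : Om -> A -> R)
    (n : nat) (h : seq (Om * A)) : R :=
  match n with
  | 0 => 0
  | n'.+1 =>
      dE (env h) (fun w =>
        dE (alg [seq (e.2, F e.1 e.2) | e <- h]) (fun a =>
          pay w a + mbp_val alg env F pay n' (rcons h (w, a))))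
  end.

Definition mbp_guarantee (alg : mbp_alg) (C : R) : Prop :=
  forall (A : finType) (Om : Type) (Psi : nat)
         (env : seq (Om * A) -> dist Om) (F : Om -> A -> R),
    (0 < #|A|)%nat ->
    (forall h, dvalid (env h) &&
               all (fun e => [forall a, 0 <= F e.2 a <= 1]) (env h)) ->
    forall b : A,
      mbp_val (@alg A Psi) env F (fun w _ => F w b) Psi [::]
      - mbp_val (@alg A Psi) env F F Psi [::]
      <= C * Num.sqrt (#|A|%:R * Psi%:R).

Section CSFLP.
Variables (S X A : finType).
Variables (f : nat -> S -> X -> R) (g : nat -> S -> X -> S).
Variables (pol : A -> S -> X) (O : oracle S X) (INF : mbp_alg).
Variables (tau T : nat).

Definition nperiods : nat := (T + tau.-1) %/ tau.

(* Expected total reward of periods psi, psi+1, ... (k of them), starting in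
   state s with INF-history ih.  Period psi covers rounds
   (psi-1)tau+1 .. min(T, psi tau). *)
Fixpoint csval (k psi : nat) (s : S) (ih : seq (A * R)) : R :=
  match k with
  | 0 => 0
  | k'.+1 =>
      let t0 := ((psi.-1 * tau).+1)%nat in
      let len := (minn T (psi * tau) - psi.-1 * tau)%nat in
      dE (@INF A nperiods ih) (fun a =>
        orun f g (O (pol a) t0 s) len t0 s [::] 0
          (fun s' r => r + csval k' psi.+1 s' (rcons ih (a, r / tau%:R))))
  end.

Definition csflp_reward (s1 : S) : R := csval nperiods 1 s1 [::].
End CSFLP.

(* Main.v *)
Require Import Defs.
From mathcomp Require Import all_boot all_order all_algebra.
From mathcomp Require Import Rstruct.
From Stdlib Require Import Rdefinitions.
From mathcomp Require Import ring lra zify.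
Set Implicit Arguments. Unset Strict Implicit. Unset Printing Implicit Defensive.
Import Order.TTheory GRing.Theory Num.Theory.
Local Open Scope ring_scope.

Definition dret (T : Type) (y : T) : dist T := [:: (1, y)].
Definition dbind (T U : Type) (d : dist T) (D : T -> dist U) : dist U :=
  flatten [seq [seq (e.1 * e'.1, e'.2) | e' <- D e.2] | e <- d].

Lemma dE_ret T (y : T) h : dE (dret y) h = h y.
Proof. by rewrite /dE big_cons big_nil /= mul1r addr0. Qed.

Lemma dE_bind T U (d : dist T) (D : T -> dist U) h :
  dE (dbind d D) h = dE d (fun y => dE (D y) h).
Proof.
rewrite /dE /dbind big_flatten /= big_map; apply: eq_bigr => e _.
rewrite big_map mulr_sumr; apply: eq_bigr => e' _ /=; by rewrite mulrA.
Qed.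

Lemma eq_dE T (d : dist T) h1 h2 : h1 =1 h2 -> dE d h1 = dE d h2.
Proof. by move=> H; apply: eq_bigr => e _; rewrite H. Qed.

Lemma dE_swap T U (d1 : dist T) (d2 : dist U) h :
  dE d1 (fun x => dE d2 (fun y => h x y)) = dE d2 (fun y => dE d1 (fun x => h x y)).
Proof.
rewrite /dE; under eq_bigr do rewrite mulr_sumr.
rewrite exchange_big; apply: eq_bigr => e2 _; rewrite mulr_sumr.
by apply: eq_bigr => e1 _; rewrite mulrCA.
Qed.

Lemma dE_sumw T (d : dist T) c : dE d (fun _ => c) = (\sum_(e <- d) e.1) * c.
Proof. by rewrite /dE mulr_suml. Qed.

Lemma dE_const T (d : dist T) c : dvalid d -> dE d (fun _ => c) = c.
Proof. by case/andP=> _ /eqP H; rewrite dE_sumw H mul1r. Qed.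

Lemma dE_add T (d : dist T) h1 h2 :
  dE d (fun x => h1 x + h2 x) = dE d h1 + dE d h2.
Proof. by rewrite /dE -big_split /=; apply: eq_bigr => e _; rewrite mulrDr. Qed.

Lemma dE_div T (d : dist T) h c : dE d h / c = dE d (fun x => h x / c).
Proof. by rewrite /dE mulr_suml; apply: eq_bigr => e _; rewrite mulrA. Qed.

Lemma dE_ge0 T (d : dist T) h :
  all (fun e => 0 <= e.1) d -> all (fun e => 0 <= h e.2) d -> 0 <= dE d h.
Proof.
rewrite /dE; elim: d => [|e d IH] /=; first by rewrite big_nil.
rewrite big_cons => /andP[H1 H2] /andP[H3 H4].
by apply: addr_ge0; [apply: mulr_ge0|apply: IH].
Qed.

Lemma dret_valid T (y : T) : dvalid (dret y).
Proof. by rewrite /dvalid /= ler01 big_cons big_nil addr0 eqxx. Qed.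

Lemma all_dbind T U (d : dist T) (D : T -> dist U) (Q : pred T) (P : pred U) :
  all (fun e => Q e.2) d -> (forall y, Q y -> all (fun e => P e.2) (D y)) ->
  all (fun e => P e.2) (dbind d D).
Proof.
rewrite /dbind; elim: d => [|e d IH] //= /andP[Hq Hd] HD.
rewrite all_cat IH // andbT all_map.
by apply: sub_all (HD _ Hq) => e' /=.
Qed.

Lemma dbind_valid T U (d : dist T) (D : T -> dist U) :
  dvalid d -> (forall y, dvalid (D y)) -> dvalid (dbind d D).
Proof.
move=> Hd HD; apply/andP; split.
  move: Hd => /andP[H _]; rewrite /dbind; elim: d H => [|e d IH] //= /andP[He Hd].
  rewrite all_cat IH // andbT all_map; move: (HD e.2) => /andP[H _].
  by apply: sub_all H => e' /= H'; apply: mulr_ge0.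
apply/eqP; have -> : \sum_(e <- dbind d D) e.1 = dE (dbind d D) (fun _ => 1).
  by rewrite dE_sumw mulr1.
rewrite dE_bind; under eq_dE do rewrite dE_const //.
exact: dE_const.
Qed.

Section Prod.
Variables (A : finType) (Y : Type) (y0 : Y) (ds : A -> dist Y).

Fixpoint prodL (l : seq A) : dist (A -> Y) :=
  match l with
  | [::] => dret (fun _ => y0)
  | a :: l' => dbind (ds a) (fun y => dbind (prodL l')
                 (fun w => dret (fun x => if x == a then y else w x)))
  end.

Hypothesis dsV : forall a, dvalid (ds a).

Lemma prodL_valid l : dvalid (prodL l).
Proof.
elim: l => [|a l IH] /=; first exact: dret_valid.
apply: dbind_valid => // y; apply: dbind_valid => // w; exact: dret_valid.
Qed.

Lemma prodL_marg l a (phi : Y -> R) : a \in l ->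
  dE (prodL l) (fun w => phi (w a)) = dE (ds a) phi.
Proof.
elim: l => [|b l IH] //=; rewrite in_cons => Ha.
rewrite dE_bind; case: (eqVneq a b) => [->|nab].
  apply: eq_dE => y; rewrite dE_bind; under eq_dE do rewrite dE_ret eqxx.
  exact: (dE_const (phi y) (prodL_valid l)).
rewrite /= in Ha; under eq_dE => y do (rewrite dE_bind; under eq_dE do rewrite dE_ret (negbTE nab)).
have Hl : a \in l by move: Ha; rewrite (negbTE nab).
rewrite IH //; exact: dE_const.
Qed.

Lemma prodL_all (P : A -> Y -> bool) l :
  (forall a, all (fun e => P a e.2) (ds a)) ->
  all (fun e => [forall a, (a \in l) ==> P a (e.2 a)]) (prodL l).
Proof.
move=> HP; elim: l => [|b l IH] /=.
  by rewrite andbT; apply/forallP => a.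
apply: (@all_dbind _ _ (ds b) _ (P b) (fun w : A -> Y => [forall a, (a \in b :: l) ==> P a (w a)])) => // y Hy.
apply: (@all_dbind _ _ _ _ (fun w : A -> Y => [forall a, (a \in l) ==> P a (w a)]) (fun w : A -> Y => [forall a, (a \in b :: l) ==> P a (w a)]) IH) => w /forallP Hw /=; rewrite andbT.
apply/forallP => a; rewrite in_cons; apply/implyP; case: (eqVneq a b) => [->|nab] //=.
by move=> Ha; move/implyP: (Hw a); apply.
Qed.
End Prod.

Section Run.
Variables (S X : finType) (f : nat -> S -> X -> R) (g : nat -> S -> X -> S).

Fixpoint runD (d : hist S X -> dist X) (n t : nat) (s : S) (h : hist S X) (acc : R)
  : dist (S * R) :=
  match n with
  | 0 => dret (s, acc)
  | n'.+1 => dbind (d h) (fun x =>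
      runD d n' t.+1 (g t s x) (rcons h (x, f t s x, g t)) (acc + f t s x))
  end.

Lemma orun_runD d n t s h acc k :
  orun f g d n t s h acc k = dE (runD d n t s h acc) (fun o => k o.1 o.2).
Proof.
elim: n t s h acc => [|n IH] t s h acc /=; first by rewrite dE_ret.
by rewrite dE_bind; apply: eq_dE => x; rewrite IH.
Qed.

Lemma runD_valid d n t s h acc : (forall h, dvalid (d h)) -> dvalid (runD d n t s h acc).
Proof.
move=> Hd; elim: n t s h acc => [|n IH] t s h acc /=; first exact: dret_valid.
by apply: dbind_valid.
Qed.

Lemma runD_range (d : hist S X -> dist X) (n t : nat) (s : S) (h : hist S X) (acc : R) :
  (forall (t' : nat) s x, (t <= t' < t + n)%nat -> 0 <= f t' s x <= 1) ->
  all (fun e => acc <= e.2.2 <= acc + n%:R) (runD d n t s h acc).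
Proof.
elim: n t s h acc => [|n IH] t s h acc Hf /=.
  by rewrite addr0 lexx.
apply: (@all_dbind _ _ (d h) _ predT (fun o : S * R => acc <= o.2 <= acc + n.+1%:R)); first by elim: (d h) => //= e l ->.
move=> x _.
have /andP[f0 f1] : 0 <= f t s x <= 1 by apply: Hf; rewrite leqnn /= addnS ltnS leq_addr.
have Hf' : forall (t' : nat) s x, (t.+1 <= t' < t.+1 + n)%nat -> 0 <= f t' s x <= 1.
  by move=> t' s' x' /andP[H1 H2]; apply: Hf; rewrite ltnW //= -addSnnS.
apply: sub_all (IH t.+1 (g t s x) (rcons h (x, f t s x, g t)) (acc + f t s x) Hf') => e /andP[H1 H2]; rewrite -natr1.
apply/andP; split; lra.
Qed.
End Run.

Section Main.
Variables (INF : mbp_alg) (S X A : finType) (pol : A -> S -> X) (O : oracle S X)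
  (tau T : nat) (s1 : S) (f : nat -> S -> X -> R) (g : nat -> S -> X -> S).

Definition t0p (psi : nat) : nat := ((psi.-1 * tau).+1)%nat.
Definition lenp (psi : nat) : nat := (minn T (psi * tau) - psi.-1 * tau)%nat.
Local Notation Om := (A -> S * R).
Definition stateOf (h : seq (Om * A)) : S := foldl (fun s (e : Om * A) => (e.1 e.2).1) s1 h.
Definition runA (a : A) (psi : nat) (s : S) :=
  runD f g (O (pol a) (t0p psi) s) (lenp psi) (t0p psi) s [::] 0.
Definition env (h : seq (Om * A)) : dist Om :=
  prodL (s1, 0) (fun a => runA a (size h).+1 (stateOf h)) (enum A).
Definition Fr (w : Om) (a : A) : R := (w a).2 / tau%:R.
Local Notation alg := (@INF A (nperiods tau T)).

Hypothesis INFV : forall h, dvalid (alg h).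
Hypothesis OV : forall gam t0 s0 h, dvalid (O gam t0 s0 h).

Lemma runAV a psi s : dvalid (runA a psi s).
Proof. by apply: runD_valid. Qed.

Lemma envV h : dvalid (env h).
Proof. apply: prodL_valid => a; exact: runAV. Qed.

Lemma env_marg h a phi :
  dE (env h) (fun w => phi (w a)) = dE (runA a (size h).+1 (stateOf h)) phi.
Proof. by rewrite /env prodL_marg ?mem_enum // => b; apply: runAV. Qed.

Lemma VF n h : mbp_val alg env Fr Fr n h =
  csval f g pol O INF tau T n (size h).+1 (stateOf h) [seq (e.2, Fr e.1 e.2) | e <- h]
  / tau%:R.
Proof.
elim: n h => [|n IH] h /=; first by rewrite mul0r.
under eq_dE => w do under eq_dE => a do rewrite IH size_rcons /stateOf foldl_rcons map_rcons /=.
rewrite dE_swap dE_div; apply: eq_dE => a.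
set phi := fun o : S * R => o.2 / tau%:R + csval f g pol O INF tau T n (size h).+2 o.1
   (rcons [seq (e.2, Fr e.1 e.2) | e <- h] (a, o.2 / tau%:R)) / tau%:R.
transitivity (dE (env h) (fun w => phi (w a))); first by [].
rewrite env_marg orun_runD dE_div; apply: eq_dE => o.
by rewrite /phi mulrDl.
Qed.
End Main.

Section Vb.
Variables (INF : mbp_alg) (S X A : finType) (pol : A -> S -> X) (O : oracle S X)
  (tau T : nat) (s1 : S) (f : nat -> S -> X -> R) (g : nat -> S -> X -> S) (b : A).
Local Notation alg := (@INF A (nperiods tau T)).
Hypothesis INFV : forall h, dvalid (alg h).
Hypothesis OV : forall gam t0 s0 h, dvalid (O gam t0 s0 h).
Hypothesis SL : stateless f g pol O T.

Definition Ep (psi : nat) := oexp f g O (pol b) (t0p tau psi) s1 (lenp tau T psi).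

Lemma oexp_state psi s : oexp f g O (pol b) (t0p tau psi) s (lenp tau T psi) = Ep psi.
Proof.
rewrite /Ep; case Hl: (lenp tau T psi) => [|m]; first by [].
have Htf : (t0p tau psi + m <= T)%nat.
  move: Hl; rewrite /lenp /t0p; lia.
have := @SL b (t0p tau psi) (t0p tau psi + m) s s1 is_true_true (leq_addr _ _) Htf.
by rewrite addKn; apply.
Qed.

Lemma Vb n h : mbp_val alg (env pol O tau T s1 f g) (Fr tau) (fun w _ => Fr tau w b) n h =
  \sum_(i < n) Ep (size h + i).+1 / tau%:R.
Proof.
elim: n h => [|n IH] h /=; first by rewrite big_ord0.
under eq_dE => w do under eq_dE => a do rewrite IH size_rcons.
under eq_dE => w do rewrite dE_const //.
rewrite dE_add dE_const; last exact: envV.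
rewrite big_ord_recl addn0; congr (_ + _); last first.
  by apply: eq_bigr => i _; rewrite lift0 addSn addnS.
transitivity (dE (env pol O tau T s1 f g h) (fun w => (fun o : S * R => o.2 / tau%:R) (w b))); first by [].
rewrite (env_marg pol tau T s1 f g OV h b (fun o : S * R => o.2 / tau%:R)) -dE_div; congr (_ / _).
by rewrite -(oexp_state _ (stateOf s1 h)) /oexp orun_runD.
Qed.
End Vb.

Section Periods.
Variables (tau T : nat).
Hypothesis tau0 : (0 < tau)%nat.
Local Notation N := (nperiods tau T).

Lemma NF1 : (N * tau <= T + tau.-1)%nat.
Proof. exact: leq_trunc_div. Qed.

Lemma NF2 : (T <= N * tau)%nat.
Proof.
have := ltn_ceil (T + tau.-1) tau0; rewrite -/(nperiods tau T) mulSn.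
move: tau0; lia.
Qed.

Lemma NF3 i : (i < N)%nat -> (i * tau < T)%nat.
Proof.
move=> H; have : (i.+1 * tau <= N * tau)%nat by rewrite leq_mul2r H orbT.
have := NF1; rewrite mulSn; move: tau0; lia.
Qed.

Variables (S X : finType) (f : nat -> S -> X -> R) (g : nat -> S -> X -> S) (s1 : S) (gam : S -> X).

Lemma polsum_split m : (m <= N)%nat ->
  \sum_(i < m) polsum f g s1 gam (t0p tau i.+1) (minn T (i.+1 * tau)) =
  polsum f g s1 gam 1 (minn T (m * tau)).
Proof.
elim: m => [|m IH] Hm.
  by rewrite big_ord0 /polsum mul0n minn0 big_geq.
rewrite big_ord_recr /= IH ?(ltnW Hm) //.
have Hlt := NF3 Hm.
have -> : minn T (m * tau) = (m * tau)%nat by apply/minn_idPr; apply: ltnW.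
rewrite /polsum /t0p /= -big_cat_nat //.
rewrite mulSn; move: tau0 Hlt; lia.
Qed.
End Periods.

Lemma all_true T (P : pred T) s : (forall x, P x) -> all P s.
Proof. by move=> H; elim: s => //= x s ->; rewrite H. Qed.

Lemma mbp_val_ge0 (A : finType) (Om : Type) alg (env : seq (Om * A) -> dist Om) F pay n h :
  (forall h, dvalid (env h)) ->
  (forall h, all (fun e => [forall a, 0 <= pay e.2 a]) (env h)) ->
  (forall h, dvalid (alg h)) ->
  0 <= @mbp_val A Om alg env F pay n h.
Proof.
move=> HV HP HA; elim: n h => [|n IH] h /=; first exact: lexx.
apply: dE_ge0; first by case/andP: (HV h).
apply: sub_all (HP h) => e /forallP He.
apply: dE_ge0; first by case/andP: (HA [seq (e0.2, F e0.1 e0.2) | e0 <- h]).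
by apply: all_true => e' /=; apply: addr_ge0.
Qed.

Lemma polsum_le (S X : finType) f g (s1 : S) (gam : S -> X) (T : nat) :
  (forall t s x, (1 <= t <= T)%nat -> 0 <= f t s x <= 1) ->
  polsum f g s1 gam 1 T <= T%:R.
Proof.
move=> Hf; rewrite /polsum.
apply: (@le_trans _ _ (\sum_(1 <= t < T.+1) (1 : R))).
  apply: ler_sum_nat => t /andP[H1 H2].
  by move: (Hf t (pstate g s1 gam t.-1) (gam (pstate g s1 gam t.-1))); rewrite H1 /= => /(_ H2)/andP[].
by rewrite sumr_const_nat subSS subn0.
Qed.

Lemma le_sq_h (x y : R) : 0 <= x -> 0 <= y -> x ^+ 2 <= y ^+ 2 -> x <= y.
Proof.
move=> x0 y0 H.
by rewrite -(ger0_norm x0) -(ger0_norm y0) -!sqrtr_sqr ler_sqrt // sqr_ge0.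
Qed.

Lemma le_sqrt_h (x y : R) : 0 <= x -> x ^+ 2 <= y -> x <= Num.sqrt y.
Proof.
move=> x0 Hy; have y0 : 0 <= y by apply: le_trans Hy; apply: sqr_ge0.
by rewrite -(ger0_norm x0) -sqrtr_sqr ler_sqrt.
Qed.

Unset Implicit Arguments.
Set Strict Implicit.

Theorem theorem10 (INF : mbp_alg) (C : R) :
  (forall (A : finType) (Psi : nat) (h : seq (A * R)), dvalid (@INF A Psi h)) ->
  mbp_guarantee INF C ->
  exists K : R,
  forall (S X A : finType) (feas : S -> X -> bool) (pol : A -> S -> X)
         (O : oracle S X) (sigma : R) (tau T : nat) (s1 : S)
         (f : nat -> S -> X -> R) (g : nat -> S -> X -> S),
    (forall a b, pol a =1 pol b -> a = b) ->
    (0 < #|A|)%nat ->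
    (forall a s, feas s (pol a s)) ->
    (forall t s x, (1 <= t <= T)%nat -> 0 <= f t s x <= 1) ->
    oracle_valid feas O ->
    chasing f g pol O s1 T sigma ->
    stateless f g pol O T ->
    0 < sigma -> sigma < tau%:R ->
    forall a : A,
      polsum f g s1 (pol a) 1 T - csflp_reward f g pol O INF tau T s1
      <= K * (sigma * T%:R / tau%:R + Num.sqrt (#|A|%:R * T%:R * tau%:R)).
Proof.
move=> INFV HG; exists (2 + 2 * Num.max C 0).
move=> S X A feas pol O sigma tau T s1 f g _ HA _ Hf OVd CH SL sig0 sigtau b.
have OV : forall gam t0 s0 h, dvalid (O gam t0 s0 h).
  by move=> gam t0 s0 h; case: (OVd gam t0 s0 h).
have tr0 : 0 < tau%:R :> R by apply: lt_trans sigtau.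
have tau0 : (0 < tau)%nat by rewrite -(ltr0n R).
set N := nperiods tau T.
set env0 := env pol O tau T s1 f g.
have Henv : forall h, dvalid (env0 h) &&
    all (fun e => [forall a, 0 <= Fr tau e.2 a <= 1]) (env0 h).
  move=> h; rewrite envV //=.
  have HP : forall a, all (fun e => (fun (a : A) (o : S * R) => 0 <= o.2 / tau%:R <= 1) a e.2)
      (runA pol O tau T f g a (size h).+1 (stateOf s1 h)).
    move=> a; rewrite /runA.
    set t0 := t0p tau (size h).+1; set len := lenp tau T (size h).+1.
    have Hr := @runD_range S X f g (O (pol a) t0 (stateOf s1 h)) len t0 (stateOf s1 h) [::] 0.
    have Hlen : (len <= tau)%nat by rewrite /len /lenp mulSn /=; lia.
    apply: sub_all (Hr _).
      move=> e /= /andP[H1 H2]; rewrite add0r in H2.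
      apply/andP; split; first by apply: divr_ge0.
      rewrite ler_pdivrMr // mul1r; apply: (le_trans H2); by rewrite ler_nat.
    move=> t' s x /andP[H1 H2]; apply: Hf.
    move: H1 H2; rewrite /t0 /len /t0p /lenp; lia.
  have := @prodL_all A (S * R) (s1, 0) (fun a => runA pol O tau T f g a (size h).+1 (stateOf s1 h)) (fun (a : A) (o : S * R) => 0 <= o.2 / tau%:R <= 1) (enum A) HP.
  apply: sub_all => e /forallP H; apply/forallP => a; move: (H a); rewrite mem_enum.
  by [].
have G := HG A (A -> S * R) N env0 (Fr tau) HA Henv b.
have INFV' : forall h, dvalid (@INF A N h) by move=> h; apply: INFV.
rewrite (Vb s1 b INFV' OV SL) (VF INF pol tau T s1 f g OV) /= in G.
set SE := \sum_(i < N) Ep pol O tau T s1 f g b i.+1.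
have HSE : \sum_(i < N) Ep pol O tau T s1 f g b (0 + i).+1 / tau%:R = SE / tau%:R.
  by rewrite /SE mulr_suml; apply: eq_bigr => i _; rewrite add0n.
rewrite HSE in G.
have -> : csflp_reward f g pol O INF tau T s1 = csval f g pol O INF tau T N 1 s1 [::] by [].
set cs := csval f g pol O INF tau T N 1 s1 [::] in G *.
set P := polsum f g s1 (pol b) 1 T.
have F1 : P <= T%:R by apply: polsum_le.
have F2 : 0 <= cs.
  have := @mbp_val_ge0 A (A -> S * R) (@INF A N) env0 (Fr tau) (Fr tau) N [::].
  rewrite (VF INF pol tau T s1 f g OV) /= => H.
  have H' : 0 <= cs / tau%:R.
    apply: H => // h; first by case/andP: (Henv h).
    case/andP: (Henv h) => _; apply: sub_all => e /forallP He; apply/forallP => a.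
    by case/andP: (He a).
  by rewrite pmulr_lge0 // invr_gt0 in H'.
have F3 : P - N%:R * sigma <= SE.
  have Hs : \sum_(i < N) (polsum f g s1 (pol b) (t0p tau i.+1) (minn T (i.+1 * tau)) - sigma) <= SE.
    apply: ler_sum => i _.
    have Hi := NF3 tau0 (ltn_ord i).
    have Hl : lenp tau T i.+1 = ((minn T (i.+1 * tau)) - t0p tau i.+1).+1%nat.
      rewrite /lenp /t0p /= mulSn; move: Hi tau0; lia.
    have Ht : (t0p tau i.+1 <= minn T (i.+1 * tau))%nat.
      rewrite /t0p /= mulSn; move: Hi tau0; lia.
    have := CH b (t0p tau i.+1) (minn T (i.+1 * tau)) s1 is_true_true Ht (geq_minl _ _).
    rewrite /Ep Hl; lra.
  move: Hs; rewrite sumrB polsum_split // sumr_const card_ord.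
  have -> : minn T (N * tau) = T by apply/minn_idPl; apply: NF2.
  by rewrite mulr_natl.
set tr : R := tau%:R; set Tr : R := T%:R; set ar : R := #|A|%:R; set Nr : R := N%:R.
set Q := Num.sqrt (ar * Tr * tr); set x := sigma * Tr / tr; set Cp := Num.max C 0.
set u := Num.sqrt (ar * Nr).
have G' : SE - cs <= tr * (C * u).
  by rewrite -mulrBl ler_pdivrMr // mulrC in G.
have ar1 : 1 <= ar by rewrite /ar ler1n.
have Tr0 : 0 <= Tr by rewrite /Tr ler0n.
have Nr0 : 0 <= Nr by rewrite /Nr ler0n.
have Q0 : 0 <= Q by apply: sqrtr_ge0.
have u0 : 0 <= u by apply: sqrtr_ge0.
have x0 : 0 <= x by apply: divr_ge0; [apply: mulr_ge0; [apply: ltW|]|apply: ltW].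
have Cp0 : 0 <= Cp by rewrite /Cp le_max lexx orbT.
have CCp : C <= Cp by rewrite /Cp le_max lexx.
have u2 : u ^+ 2 = ar * Nr by rewrite sqr_sqrtr // mulr_ge0 // (le_trans ler01 ar1).
have Q2 : Q ^+ 2 = ar * Tr * tr by rewrite sqr_sqrtr // !mulr_ge0 // ?(le_trans ler01 ar1) // ltW.
have CpQ : 0 <= Cp * Q by apply: mulr_ge0.
have Cpx : 0 <= Cp * x by apply: mulr_ge0.
case: (ltnP T tau) => HTt.
  have TQ : Tr <= Q.
    apply: le_sqrt_h => //.
    have : Tr <= tr by rewrite /Tr /tr ler_nat ltnW.
    move=> H; rewrite expr2.
    have h1 : 0 <= (tr - Tr) * Tr by apply: mulr_ge0 => //; lra.
    have h2 : 0 <= (ar - 1) * (Tr * tr) by apply: mulr_ge0; [lra|apply: mulr_ge0 => //; apply: ltW].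
    nra.
  nra.
have trT : tr <= Tr by rewrite /Tr /tr ler_nat.
have NrT : Nr * tr <= Tr + tr.
  rewrite /Nr /Tr /tr -natrM -natrD ler_nat.
  by apply: leq_trans (NF1 tau T) _; rewrite leq_add2l leq_pred.
have ar0 : 0 <= ar by lra.
have tr0' : 0 <= tr by apply: ltW.
have trQ : tr <= Q.
  apply: le_sqrt_h => //; rewrite expr2.
  have h1 : 0 <= (Tr - tr) * tr by apply: mulr_ge0 => //; lra.
  have h2 : 0 <= (ar - 1) * (Tr * tr) by apply: mulr_ge0; [lra|apply: mulr_ge0].
  lra.
have Hu : tr * u <= 2 * Q.
  apply: le_sq_h; [exact: mulr_ge0|exact: mulr_ge0|].
  rewrite !exprMn u2 Q2 expr2.
  have h1 : 0 <= (ar * tr) * ((Tr + tr) - Nr * tr) by apply: mulr_ge0; [apply: mulr_ge0|lra].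
  have h2 : 0 <= (ar * tr) * (Tr - tr) by apply: mulr_ge0; [apply: mulr_ge0|lra].
  have h3 : 0 <= ar * Tr * tr by rewrite !mulr_ge0.
  lra.
have xtr : x * tr = sigma * Tr by rewrite /x divfK // gt_eqF.
have HN : Nr * sigma <= x + sigma.
  rewrite -(ler_pM2r tr0) mulrDl xtr.
  have h1 : 0 <= sigma * ((Tr + tr) - Nr * tr) by apply: mulr_ge0; [apply: ltW|lra].
  lra.
have Ctu : tr * (C * u) <= Cp * (tr * u).
  have h1 : 0 <= (Cp - C) * (tr * u) by apply: mulr_ge0; [lra|apply: mulr_ge0].
  lra.
have Cu2 : Cp * (tr * u) <= Cp * (2 * Q).
  have h1 : 0 <= Cp * (2 * Q - tr * u) by apply: mulr_ge0; [|lra].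
  lra.
have -> : (2 + 2 * Cp) * (x + Q) = 2 * x + 2 * Q + 2 * (Cp * x) + 2 * (Cp * Q) by ring.
have E2 : Cp * (2 * Q) = 2 * (Cp * Q) by ring.
rewrite E2 in Cu2.
lra.
Qed.
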